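(* Let $(b,c)$ be a connected canonically compactifiable weighted graph over $X$, and let $K$ and $j:X\to K$ be as in the context. Then $j(X)$ is a dense open subset of $K$; in fact, for every $x\in X$ the singleton $\{j(x)\}$ is open in $K$.
   Context: Let $X$ be a countably infinite set. A weighted graph $(b,c)$ over $X$ consists of a symmetric $b:X\times X\to[0,\infty)$ with $b(x,x)=0$ and $\sum_{y}b(x,y)<\infty$ for all $x$, and $c:X\to[0,\infty)$; it is connected if any two distinct vertices are joined by a finite sequence of pairwise distinct vertices with consecutive ones satisfying $b>0$. Let $\widetilde Q(f)=\frac12\sum_{x,y}b(x,y)|f(x)-f(y)|^2+\sum_x c(x)|f(x)|^2$ and $\widetilde D=\{f:X\to\mathbb C:\widetilde Q(f)<\infty\}$. The graph is canonically compactifiable if $\widetilde D\subseteq\ell^\infty(X)$; then $\widetilde D$ is an algebra. Let $\mathcal A$ be the sup-norm closure of $\widetilde D$ in $\ell^\infty(X)$ and $\mathcal A^+$ the smallest $C^*$-subalgebra of $\ell^\infty(X)$ containing $\mathcal A$ and the constant function $1$. Let $K$ be the set of characters (nonzero multiplicative linear functionals $\mathcal A^+\to\mathbb C$) with the weak-$*$ topology, a compact Hausdorff space. Define $j:X\to K$ by $j(x)=\delta_x$, $\delta_x(f)=f(x)$. *)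

(* Defs.v *)
From Stdlib Require Import Reals List.
Import ListNotations.
Open Scope R_scope.

Definition C : Type := (R * R)%type.
Definition Cre (z : C) : R := fst z.
Definition Cim (z : C) : R := snd z.
Definition C0 : C := (0, 0).
Definition C1 : C := (1, 0).
Definition Cadd (z w : C) : C := (fst z + fst w, snd z + snd w).
Definition Copp (z : C) : C := (- fst z, - snd z).
Definition Csub (z w : C) : C := Cadd z (Copp w).
Definition Cmul (z w : C) : C :=
  (fst z * fst w - snd z * snd w, fst z * snd w + snd z * fst w).
Definition Cconj (z : C) : C := (fst z, - snd z).
Definition Cnorm2 (z : C) : R := fst z * fst z + snd z * snd z.
Definition Cnorm (z : C) : R := sqrt (Cnorm2 z).

Fixpoint lsum {I : Type} (a : I -> R) (l : list I) : R :=
  match l with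
  | [] => 0
  | i :: l' => a i + lsum a l'
  end.

(** A family of nonnegative reals indexed by an arbitrary (countable) type has
    finite sum iff its finite partial sums (over duplicate-free lists) are
    bounded. *)
Definition summable {I : Type} (a : I -> R) : Prop :=
  exists M : R, forall l : list I, NoDup l -> lsum a l <= M.

Definition countably_infinite (X : Type) : Prop :=
  exists e : nat -> X,
    (forall n m, e n = e m -> n = m) /\ (forall x, exists n, e n = x).

Definition weighted_graph {X : Type} (b : X -> X -> R) (c : X -> R) : Prop :=
  (forall x y, 0 <= b x y) /\
  (forall x y, b x y = b y x) /\
  (forall x, b x x = 0) /\
  (forall x, summable (b x)) /\
  (forall x, 0 <= c x).

Fixpoint is_chain {X : Type} (b : X -> X -> R) (l : list X) : Prop :=
  match l with
  | x :: ((y :: _) as l') => 0 < b x y /\ is_chain b l'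
  | _ => True
  end.

Definition connected_graph {X : Type} (b : X -> X -> R) : Prop :=
  forall x y : X, x <> y ->
    exists l : list X,
      NoDup (x :: l ++ [y]) /\ is_chain b (x :: l ++ [y]).

Definition bounded {X : Type} (f : X -> C) : Prop :=
  exists M : R, forall x, Cnorm (f x) <= M.

(** f ∈ D~ : Q~(f) < ∞, i.e. both (nonnegative) parts of Q~(f) are finite *)
Definition in_Dtilde {X : Type} (b : X -> X -> R) (c : X -> R) (f : X -> C)
  : Prop :=
  summable (fun p : X * X =>
              b (fst p) (snd p) * Cnorm2 (Csub (f (fst p)) (f (snd p)))) /\
  summable (fun x => c x * Cnorm2 (f x)).

Definition canonically_compactifiable {X : Type}
  (b : X -> X -> R) (c : X -> R) : Prop :=
  forall f : X -> C, in_Dtilde b c f -> bounded f.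

Definition fadd {X : Type} (f g : X -> C) : X -> C := fun x => Cadd (f x) (g x).
Definition fscale {X : Type} (a : C) (f : X -> C) : X -> C := fun x => Cmul a (f x).
Definition fmul {X : Type} (f g : X -> C) : X -> C := fun x => Cmul (f x) (g x).
Definition fconj {X : Type} (f : X -> C) : X -> C := fun x => Cconj (f x).
Definition fone {X : Type} : X -> C := fun _ => C1.

Definition sup_closure {X : Type} (S : (X -> C) -> Prop) (g : X -> C) : Prop :=
  bounded g /\
  forall eps : R, 0 < eps ->
    exists f, S f /\ forall x, Cnorm (Csub (f x) (g x)) <= eps.

Definition algA {X : Type} (b : X -> X -> R) (c : X -> R) : (X -> C) -> Prop :=
  sup_closure (in_Dtilde b c).

Definition Cstar_subalgebra {X : Type} (S : (X -> C) -> Prop) : Prop :=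
  (forall f, S f -> bounded f) /\
  S (fun _ => C0) /\
  (forall f g, S f -> S g -> S (fadd f g)) /\
  (forall a f, S f -> S (fscale a f)) /\
  (forall f g, S f -> S g -> S (fmul f g)) /\
  (forall f, S f -> S (fconj f)) /\
  (forall g, sup_closure S g -> S g).

Definition algAplus {X : Type} (b : X -> X -> R) (c : X -> R) (f : X -> C)
  : Prop :=
  forall S : (X -> C) -> Prop,
    Cstar_subalgebra S -> (forall g, algA b c g -> S g) -> S fone -> S f.

(** * Characters of 𝒜^+.  A functional is represented by a map
    (X -> C) -> C; only its values on 𝒜^+ are relevant. *)
Definition is_character {X : Type} (b : X -> X -> R) (c : X -> R)
  (phi : (X -> C) -> C) : Prop :=
  (forall f g, algAplus b c f -> algAplus b c g ->
     phi (fadd f g) = Cadd (phi f) (phi g)) /\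
  (forall a f, algAplus b c f -> phi (fscale a f) = Cmul a (phi f)) /\
  (forall f g, algAplus b c f -> algAplus b c g ->
     phi (fmul f g) = Cmul (phi f) (phi g)) /\
  (exists f, algAplus b c f /\ phi f <> C0).

(** j(x) = δ_x *)
Definition delta {X : Type} (x : X) : (X -> C) -> C := fun f => f x.

(** two functionals represent the same character iff they agree on 𝒜^+ *)
Definition same_char {X : Type} (b : X -> X -> R) (c : X -> R)
  (phi psi : (X -> C) -> C) : Prop :=
  forall f, algAplus b c f -> phi f = psi f.

(** Open subsets of K (weak-* topology): a set U of characters (required to be
    invariant under same_char) is open iff every phi ∈ U has a basic
    weak-* neighbourhood { psi ∈ K : |psi f_i - phi f_i| < eps, i } inside U,
    with f_1,...,f_n ∈ 𝒜^+. *)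
Definition weakstar_open {X : Type} (b : X -> X -> R) (c : X -> R)
  (U : ((X -> C) -> C) -> Prop) : Prop :=
  (forall phi psi, is_character b c phi -> is_character b c psi ->
     same_char b c phi psi -> U phi -> U psi) /\
  forall phi, is_character b c phi -> U phi ->
    exists (fs : list (X -> C)) (eps : R),
      0 < eps /\ (forall f, In f fs -> algAplus b c f) /\
      forall psi, is_character b c psi ->
        (forall f, In f fs -> Cnorm (Csub (psi f) (phi f)) < eps) -> U psi.

Definition jX {X : Type} (b : X -> X -> R) (c : X -> R)
  (phi : (X -> C) -> C) : Prop :=
  exists x : X, same_char b c phi (delta x).

Definition j_singleton {X : Type} (b : X -> X -> R) (c : X -> R) (x : X)
  (phi : (X -> C) -> C) : Prop :=
  same_char b c phi (delta x).

Definition weakstar_dense {X : Type} (b : X -> X -> R) (c : X -> R)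
  (D : ((X -> C) -> C) -> Prop) : Prop :=
  forall U, weakstar_open b c U ->
    (exists phi, is_character b c phi /\ U phi) ->
    exists phi, is_character b c phi /\ U phi /\ D phi.

(* Main.v *)
Require Import Defs.
From Stdlib Require Import Reals List Lra Psatz ClassicalDescription Classical FunctionalExtensionality.
Require Import Defs.
Import ListNotations.
Open Scope R_scope.

Lemma Cnorm2_ge0 z : 0 <= Cnorm2 z.
Proof. destruct z as [a b]; unfold Cnorm2; simpl; nra. Qed.

Lemma Cnorm_sq z : Cnorm z * Cnorm z = Cnorm2 z.
Proof. unfold Cnorm; apply sqrt_sqrt, Cnorm2_ge0. Qed.

Lemma Cnorm_ge0 z : 0 <= Cnorm z.
Proof. apply sqrt_pos. Qed.

Lemma bounded_iff {X} (f : X -> C) : bounded f <-> exists B, forall x, Cnorm2 (f x) <= B.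
Proof.
  split.
  - intros [M HM]. exists (M*M). intros x. rewrite <- Cnorm_sq.
    specialize (HM x). pose proof (Cnorm_ge0 (f x)). nra.
  - intros [B HB]. exists (sqrt B). intros x. unfold Cnorm. apply sqrt_le_1_alt, HB.
Qed.

Lemma Cnorm_le a b e : b = 0 -> Rabs a <= e -> Cnorm (a, b) <= e.
Proof.
  intros -> H. unfold Cnorm, Cnorm2; simpl.
  replace (a*a+0*0) with (Rsqr a) by (unfold Rsqr; ring). rewrite sqrt_Rsqr_abs. exact H.
Qed.

Lemma Cnorm2_lt a b e : 0 <= e -> Cnorm2 (a,b) < e*e -> Cnorm (a,b) < e.
Proof.
  intros He H. pose proof (Cnorm_sq (a,b)). pose proof (Cnorm_ge0 (a,b)). nra.
Qed.

Lemma idem (z : C) : Cmul z z = z -> z = C0 \/ z = C1.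
Proof.
  destruct z as [a b]. unfold Cmul; simpl. intros H. injection H as H1 H2.
  assert (Hb : b = 0).
  { destruct (Req_dec b 0) as [|Hb]; auto.
    assert (Ha : (2*a - 1) * b = 0) by lra.
    apply Rmult_integral in Ha. destruct Ha as [Ha|Ha]; [|contradiction].
    assert (a = /2) by lra. subst a. nra. }
  subst b. assert (a * (a - 1) = 0) by lra.
  apply Rmult_integral in H. destruct H; [left|right]; unfold C0, C1; f_equal; lra.
Qed.

Lemma Cmul_1r z : Cmul z C1 = z.
Proof. destruct z; unfold Cmul, C1; simpl; f_equal; ring. Qed.
Lemma Cmul_0l z : Cmul C0 z = C0.
Proof. destruct z; unfold Cmul, C0; simpl; f_equal; ring. Qed.
Lemma Cmul_0r z : Cmul z C0 = C0.
Proof. destruct z; unfold Cmul, C0; simpl; f_equal; ring. Qed.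
Lemma C1_neq_C0 : C1 <> C0.
Proof. unfold C1, C0; intros H; injection H; lra. Qed.

Section Alg.
Context {X : Type} (b : X -> X -> R) (c : X -> R).

Lemma aplus_one : algAplus b c fone.
Proof. intros S HS HA H1; exact H1. Qed.
Lemma aplus_A g : algA b c g -> algAplus b c g.
Proof. intros Hg S HS HA H1; auto. Qed.
Lemma aplus_add f g : algAplus b c f -> algAplus b c g -> algAplus b c (fadd f g).
Proof. intros Hf Hg S HS HA H1. pose proof HS as HS'. destruct HS as (_&_&Ha&_). apply Ha; [apply Hf|apply Hg]; auto. Qed.
Lemma aplus_scale a f : algAplus b c f -> algAplus b c (fscale a f).
Proof. intros Hf S HS HA H1. pose proof HS as HS'. destruct HS as (_&_&_&Ha&_). apply Ha; apply Hf; auto. Qed.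
Lemma aplus_mul f g : algAplus b c f -> algAplus b c g -> algAplus b c (fmul f g).
Proof. intros Hf Hg S HS HA H1. pose proof HS as HS'. destruct HS as (_&_&_&_&Ha&_). apply Ha; [apply Hf|apply Hg]; auto. Qed.
Lemma aplus_conj f : algAplus b c f -> algAplus b c (fconj f).
Proof. intros Hf S HS HA H1. pose proof HS as HS'. destruct HS as (_&_&_&_&_&Ha&_). apply Ha; apply Hf; auto. Qed.
Lemma aplus_closed g : sup_closure (algAplus b c) g -> algAplus b c g.
Proof.
  intros [Hb Hap] S HS HA H1. pose proof HS as HS'. destruct HS as (_&_&_&_&_&_&Hc).
  apply Hc. split; auto. intros e he. destruct (Hap e he) as [f [Hf Hfe]].
  exists f; split; [apply Hf; auto | exact Hfe].
Qed.

Lemma bounded_cstar : Cstar_subalgebra (@bounded X).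
Proof.
  repeat split.
  - auto.
  - exists 0; intros; unfold Cnorm, Cnorm2, C0; simpl. replace (0*0+0*0) with 0 by ring; rewrite sqrt_0; lra.
  - intros f g Hf Hg. apply bounded_iff in Hf as [B1 H1]. apply bounded_iff in Hg as [B2 H2].
    apply bounded_iff. exists (2*(B1+B2)). intros x. specialize (H1 x). specialize (H2 x).
    unfold fadd. destruct (f x) as [a1 a2]; destruct (g x) as [b1 b2].
    unfold Cnorm2, Cadd in *; simpl in *. pose proof (pow2_ge_0 (a1-b1)); pose proof (pow2_ge_0 (a2-b2)); nra.
  - intros a f Hf. apply bounded_iff in Hf as [B1 H1]. apply bounded_iff.
    exists (Cnorm2 a * B1). intros x. specialize (H1 x). unfold fscale.
    pose proof (Cnorm2_ge0 a) as Ha.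
    replace (Cnorm2 (Cmul a (f x))) with (Cnorm2 a * Cnorm2 (f x)).
    + apply Rmult_le_compat_l; auto.
    + destruct a; destruct (f x); unfold Cnorm2, Cmul; simpl; ring.
  - intros f g Hf Hg. apply bounded_iff in Hf as [B1 H1]. apply bounded_iff in Hg as [B2 H2].
    apply bounded_iff. exists (B1*B2). intros x. specialize (H1 x). specialize (H2 x).
    unfold fmul. pose proof (Cnorm2_ge0 (f x)). pose proof (Cnorm2_ge0 (g x)).
    replace (Cnorm2 (Cmul (f x) (g x))) with (Cnorm2 (f x) * Cnorm2 (g x)).
    + nra.
    + destruct (f x); destruct (g x); unfold Cnorm2, Cmul; simpl; ring.
  - intros f Hf. apply bounded_iff in Hf as [B1 H1]. apply bounded_iff. exists B1.
    intros x. specialize (H1 x). unfold fconj. destruct (f x); unfold Cnorm2, Cconj in *; simpl in *; nra.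
  - intros g [Hg _]; exact Hg.
Qed.

Lemma aplus_bounded f : algAplus b c f -> bounded f.
Proof.
  intros Hf. apply Hf.
  - apply bounded_cstar.
  - intros g [Hg _]; exact Hg.
  - exists 1. intros; unfold Cnorm, Cnorm2, fone, C1; simpl. replace (1*1+0*0) with 1 by ring; rewrite sqrt_1; lra.
Qed.
End Alg.

Lemma lsum_le {I} (a a' : I -> R) l : (forall i, a i <= a' i) -> lsum a l <= lsum a' l.
Proof. intros H; induction l; simpl; [lra|]. specialize (H a0); lra. Qed.
Lemma lsum_plus {I} (a a' : I -> R) l : lsum (fun i => a i + a' i) l = lsum a l + lsum a' l.
Proof. induction l; simpl; lra. Qed.

Definition dec (P : Prop) : bool := if excluded_middle_informative P then true else false.

Lemma lsum_filter {I J} (pr1 : I -> J) (pr2 : I -> J) (x : J) (F : J -> R) (l : list I) :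
  lsum (fun p => if excluded_middle_informative (pr1 p = x) then F (pr2 p) else 0) l
  = lsum F (map pr2 (filter (fun p => dec (pr1 p = x)) l)).
Proof.
  induction l as [|p l IH]; simpl; [reflexivity|]. unfold dec at 1.
  destruct (excluded_middle_informative (pr1 p = x)); simpl; rewrite IH; ring.
Qed.

Lemma nodup_filter {I J} (pr1 pr2 : I -> J) (x : J) (l : list I) :
  (forall p q, pr1 p = pr1 q -> pr2 p = pr2 q -> p = q) ->
  NoDup l -> NoDup (map pr2 (filter (fun p => dec (pr1 p = x)) l)).
Proof.
  intros Hinj Hl. induction Hl as [|p l Hp Hl IH]; simpl; [constructor|].
  unfold dec at 1. destruct (excluded_middle_informative (pr1 p = x)) as [E|E]; simpl; auto.
  constructor; auto. intros Hin. apply in_map_iff in Hin as [q [Hq Hin]].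
  apply filter_In in Hin as [Hin Hd]. unfold dec in Hd.
  destruct (excluded_middle_informative (pr1 q = x)); [|discriminate].
  assert (q = p) by (apply Hinj; congruence). subst; contradiction.
Qed.



Lemma lsum_single {I} (a : I -> R) (x : I) l :
  (forall y, y <> x -> a y = 0) -> (0 <= a x) -> NoDup l -> lsum a l <= a x.
Proof.
  intros Hz Hx Hl.
  assert (H0 : forall l, ~ In x l -> lsum a l = 0).
  { induction l0 as [|y l0 IH]; simpl; intros Hn; [reflexivity|].
    rewrite Hz by (intros ->; apply Hn; left; auto). rewrite IH by auto. ring. }
  induction Hl as [|y l Hy Hl IH]; simpl; [lra|].
  destruct (excluded_middle_informative (y = x)) as [->|Hne].
  - rewrite H0 by auto. lra.
  - rewrite Hz by auto. lra.
Qed.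

Definition ind {X : Type} (x : X) : X -> C :=
  fun y => if excluded_middle_informative (y = x) then C1 else C0.

Lemma ind_Dtilde {X} (b : X -> X -> R) (c : X -> R) (x : X) :
  weighted_graph b c -> in_Dtilde b c (ind x).
Proof.
  intros (Hb0 & Hbs & Hbx & Hsum & Hc0). split.
  - destruct (Hsum x) as [M HM]. exists (M + M). intros l Hl.
    eapply Rle_trans.
    { apply (lsum_le _ (fun p => (if excluded_middle_informative (fst p = x) then b x (snd p) else 0)
                              + (if excluded_middle_informative (snd p = x) then b x (fst p) else 0))).
      intros [p1 p2]; simpl. unfold ind.
      destruct (excluded_middle_informative (p1 = x)) as [->|H1];
      destruct (excluded_middle_informative (p2 = x)) as [->|H2];
      unfold Cnorm2, Csub, Cadd, Copp, C1, C0; simpl.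
      - pose proof (Hb0 x x); nra.
      - lra.
      - rewrite (Hbs p1 x); lra.
      - pose proof (Hb0 x p1); pose proof (Hb0 p1 p2); nra. }
    rewrite lsum_plus.
    rewrite (lsum_filter (@fst X X) (@snd X X)).
    rewrite (lsum_filter (@snd X X) (@fst X X)).
    assert (Hi : forall p q : X * X, fst p = fst q -> snd p = snd q -> p = q).
    { intros [] [] ? ?; simpl in *; congruence. }
    pose proof (HM _ (nodup_filter (@fst X X) (@snd X X) x l Hi Hl)).
    pose proof (HM _ (nodup_filter (@snd X X) (@fst X X) x l
                        (fun p q H1 H2 => Hi p q H2 H1) Hl)).
    lra.
  - exists (c x * Cnorm2 (ind x x)). intros l Hl. apply (lsum_single (fun y => c y * Cnorm2 (ind x y)) x l); auto.
    + intros y Hy. unfold ind. destruct (excluded_middle_informative (y = x)); [contradiction|].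
      unfold Cnorm2, C0; simpl; ring.
    + pose proof (Hc0 x); pose proof (Cnorm2_ge0 (ind x x)). nra.
Qed.

Section Chars.
Context {X : Type} (b : X -> X -> R) (c : X -> R) (hG : weighted_graph b c).

Lemma Csub_self z : Cnorm (Csub z z) = 0.
Proof. destruct z; unfold Cnorm, Cnorm2, Csub, Cadd, Copp; simpl.
  replace ((r + - r) * (r + - r) + (r0 + - r0) * (r0 + - r0)) with 0 by ring. apply sqrt_0. Qed.

Lemma ind_aplus x : algAplus b c (ind x).
Proof.
  apply aplus_A. split.
  - apply bounded_iff. exists 1. intros y. unfold ind.
    destruct (excluded_middle_informative (y = x)); unfold Cnorm2, C1, C0; simpl; lra.
  - intros e he. exists (ind x). split; [apply ind_Dtilde; auto|]. intros y. rewrite Csub_self; lra.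
Qed.

Lemma char_one phi : is_character b c phi -> phi fone = C1.
Proof.
  intros (Hadd & Hsc & Hmul & f & Hf & Hnz).
  assert (E : phi fone = Cmul (phi fone) (phi fone)).
  { rewrite <- Hmul by apply aplus_one. f_equal. apply functional_extensionality; intros y.
    unfold fmul, fone, Cmul, C1; simpl; f_equal; ring. }
  destruct (idem (phi fone)) as [H0|H1]; auto.
  exfalso. apply Hnz.
  assert (E2 : fmul f fone = f) by (apply functional_extensionality; intros y; unfold fmul, fone; apply Cmul_1r).
  rewrite <- E2, Hmul by auto using aplus_one. rewrite H0. apply Cmul_0r.
Qed.

Lemma delta_char x : is_character b c (delta x).
Proof.
  repeat split; auto. exists fone. split; [apply aplus_one|]. unfold delta, fone. apply C1_neq_C0.
Qed.

Lemma char_at x psi : is_character b c psi ->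
  Cnorm (Csub (psi (ind x)) C1) < 1 -> same_char b c psi (delta x).
Proof.
  intros Hpsi Hn. pose proof Hpsi as (Hadd & Hsc & Hmul & _).
  assert (Hi : psi (ind x) = C1).
  { assert (E : fmul (ind x) (ind x) = ind x).
    { apply functional_extensionality; intros y. unfold fmul, ind.
      destruct (excluded_middle_informative (y = x)); [apply Cmul_1r| apply Cmul_0r]. }
    assert (E2 : Cmul (psi (ind x)) (psi (ind x)) = psi (ind x)).
    { rewrite <- Hmul by apply ind_aplus. rewrite E; auto. }
    destruct (idem _ E2) as [H0|H1]; auto. exfalso. rewrite H0 in Hn.
    unfold Cnorm, Cnorm2, Csub, Cadd, Copp, C0, C1 in Hn; simpl in Hn.
    replace ((0 + - (1)) * (0 + - (1)) + (0 + - (0)) * (0 + - (0))) with 1 in Hn by ring.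
    rewrite sqrt_1 in Hn. lra. }
  intros f Hf. unfold delta.
  assert (E : fmul f (ind x) = fscale (f x) (ind x)).
  { apply functional_extensionality; intros y. unfold fmul, fscale, ind.
    destruct (excluded_middle_informative (y = x)) as [->|]; auto. rewrite !Cmul_0r; auto. }
  assert (E2 : Cmul (psi f) (psi (ind x)) = Cmul (f x) (psi (ind x))).
  { rewrite <- Hmul, E, Hsc by auto using ind_aplus. reflexivity. }
  rewrite Hi, !Cmul_1r in E2. exact E2.
Qed.

Lemma nbhd x phi : same_char b c phi (delta x) ->
  exists (fs : list (X -> C)) (eps : R),
      0 < eps /\ (forall f, In f fs -> algAplus b c f) /\
      forall psi, is_character b c psi ->
        (forall f, In f fs -> Cnorm (Csub (psi f) (phi f)) < eps) -> same_char b c psi (delta x).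
Proof.
  intros Hphi. exists [ind x], 1. split; [lra|]. split.
  - intros f [<-|[]]. apply ind_aplus.
  - intros psi Hpsi Hn. apply char_at; auto. specialize (Hn (ind x) (or_introl eq_refl)).
    rewrite Hphi in Hn by apply ind_aplus. unfold delta, ind in Hn.
    destruct (excluded_middle_informative (x = x)); [exact Hn|congruence].
Qed.

Lemma open_sing x : weakstar_open b c (j_singleton b c x).
Proof.
  split.
  - intros phi psi _ _ Hs Hp f Hf. rewrite <- Hs by auto. apply Hp; auto.
  - intros phi _ Hp. exact (nbhd x phi Hp).
Qed.

Lemma open_jX : weakstar_open b c (jX b c).
Proof.
  split.
  - intros phi psi _ _ Hs [x Hp]. exists x. intros f Hf. rewrite <- Hs by auto. apply Hp; auto.
  - intros phi _ [x Hp]. destruct (nbhd x phi Hp) as (fs & eps & He & Hfs & Hn).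
    exists fs, eps. split; [auto|split; auto]. intros psi Hpsi Hin. exists x. apply Hn; auto.
Qed.
End Chars.



Lemma lsum_ge0 {I} (a : I -> R) l : (forall i, 0 <= a i) -> 0 <= lsum a l.
Proof. intros H; induction l; simpl; [lra|]. specialize (H a0); lra. Qed.

Lemma lsum_ge_mem {I} (a : I -> R) l i0 : (forall i, 0 <= a i) -> In i0 l -> a i0 <= lsum a l.
Proof.
  intros H Hin. induction l as [|j l IH]; simpl in *; [contradiction|].
  destruct Hin as [->|Hin].
  - pose proof (lsum_ge0 a l H). lra.
  - specialize (IH Hin). specialize (H j). lra.
Qed.

Section Dense.
Context {X : Type} (b : X -> X -> R) (c : X -> R).

Fixpoint pw (H : X -> C) (k : nat) : X -> C :=
  match k with O => fone | S k => fmul H (pw H k) end.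
Fixpoint ps (H : X -> C) (N : nat) : X -> C :=
  match N with O => fscale C0 fone | S N => fadd (pw H N) (ps H N) end.
Fixpoint gs (r : R) (N : nat) : R :=
  match N with O => 0 | S N => r ^ N + gs r N end.

Lemma pw_pt H r k y : (forall y, H y = (r y, 0)) -> pw H k y = (r y ^ k, 0).
Proof.
  intros HH. induction k; simpl.
  - reflexivity.
  - unfold fmul. rewrite IHk, HH. unfold Cmul; simpl; f_equal; ring.
Qed.
Lemma ps_pt H r N y : (forall y, H y = (r y, 0)) -> ps H N y = (gs (r y) N, 0).
Proof.
  intros HH. induction N; simpl.
  - unfold fscale, fone, Cmul, C0, C1; simpl; f_equal; ring.
  - unfold fadd. rewrite IHN, (pw_pt H r) by auto. unfold Cadd; simpl; f_equal; ring.
Qed.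
Lemma gs_eq r N : gs r N * (1 - r) = 1 - r ^ N.
Proof. induction N; simpl; [ring|]. rewrite Rmult_plus_distr_r, IHN. ring. Qed.
Lemma pw_aplus H k : algAplus b c H -> algAplus b c (pw H k).
Proof. intros HH; induction k; simpl; [apply aplus_one| apply aplus_mul; auto]. Qed.
Lemma ps_aplus H N : algAplus b c H -> algAplus b c (ps H N).
Proof.
  intros HH; induction N; simpl.
  - apply aplus_scale, aplus_one.
  - apply aplus_add; auto using pw_aplus.
Qed.

Lemma inv_aplus (G : X -> R) (d : R) : algAplus b c (fun y => (G y, 0)) ->
  0 < d -> (forall y, d <= G y) -> algAplus b c (fun y => (/ G y, 0)).
Proof.
  intros Hg Hd HGd.
  destruct (proj1 (bounded_iff _) (aplus_bounded b c _ Hg)) as [B HB].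
  set (M := Rmax B 0 + 1).
  set (H := fadd fone (fscale (- / M, 0) (fun y => (G y, 0)))).
  set (r := fun y => 1 + (- / M) * G y).
  assert (HH : forall y, H y = (r y, 0)).
  { intros y. unfold H, r, fadd, fscale, fone, Cmul, Cadd, C1; simpl. f_equal; ring. }
  assert (HHa : algAplus b c H).
  { apply aplus_add; [apply aplus_one| apply aplus_scale; auto]. }
  assert (Hfacts : forall y, 0 < M /\ d <= G y /\ G y <= M /\ 0 < G y).
  { intros y. specialize (HB y). specialize (HGd y). unfold Cnorm2 in HB; simpl in HB.
    pose proof (Rmax_l B 0). pose proof (Rmax_r B 0). unfold M. nra. }
  apply aplus_closed. split.
  - apply bounded_iff. exists (/ d * / d). intros y. unfold Cnorm2; simpl.
    destruct (Hfacts y) as (HM & Hdy & _ & Hpos).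
    assert (/ G y <= / d) by (apply Rinv_le_contravar; auto).
    assert (0 < / G y) by (apply Rinv_0_lt_compat; auto). nra.
  - intros e he.
    set (q := Rmax 0 (1 - d / M)).
    assert (HMpos : 0 < M) by (pose proof (Rmax_r B 0); unfold M; lra).
    assert (Hq : 0 <= q < 1).
    { assert (0 < d / M) by (unfold Rdiv; apply Rmult_lt_0_compat; [lra|apply Rinv_0_lt_compat; lra]).
      unfold q; split; [apply Rmax_l|]. apply Rmax_lub_lt; lra. }
    destruct (pow_lt_1_zero q ltac:(rewrite Rabs_right; lra) (e * d) ltac:(nra)) as [N HN].
    specialize (HN N (Nat.le_refl N)). rewrite Rabs_right in HN by (apply Rle_ge, pow_le; lra).
    exists (fscale (/ M, 0) (ps H N)). split.
    { apply aplus_scale, ps_aplus; auto. }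
    intros y. unfold fscale. rewrite (ps_pt H r) by auto.
    destruct (Hfacts y) as (_ & Hdy & HGM & Hpos).
    unfold Csub, Cadd, Copp, Cmul; simpl. apply Cnorm_le; [ring|].
    pose proof (gs_eq (r y) N) as Hgs.
    assert (E : / M * gs (r y) N - 0 * 0 + - / G y = - (r y ^ N / G y)).
    { assert (E1 : 1 - r y = G y / M) by (unfold r; field; lra).
      rewrite E1 in Hgs. replace (r y ^ N) with (1 - gs (r y) N * (G y / M)) by lra.
      field; lra. }
    rewrite E, Rabs_Ropp.
    assert (Hr : 0 <= r y <= q).
    { unfold r, q. split.
      - assert (G y / M <= 1) by (apply Rmult_le_reg_r with M; [lra|]; field_simplify; lra).
        unfold Rdiv in *. lra.
      - assert (d / M <= G y / M) by (unfold Rdiv; apply Rmult_le_compat_r; [left; apply Rinv_0_lt_compat; lra|lra]).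
        pose proof (Rmax_r 0 (1 - d / M)). unfold Rdiv in *. lra. }
    assert (Hp : r y ^ N <= q ^ N) by (apply pow_incr; lra).
    pose proof (pow_le (r y) N (proj1 Hr)).
    assert (/ G y <= / d) by (apply Rinv_le_contravar; auto).
    assert (0 < / G y) by (apply Rinv_0_lt_compat; auto).
    rewrite Rabs_right by (apply Rle_ge; unfold Rdiv; apply Rmult_le_pos; lra).
    unfold Rdiv.
    apply Rle_trans with (q ^ N * / d); [apply Rmult_le_compat; lra|].
    apply Rmult_le_reg_r with d; [lra|]. rewrite Rmult_assoc, Rinv_l by lra. lra.
Qed.
End Dense.

Section Dense2.
Context {X : Type} (b : X -> X -> R) (c : X -> R) (hG : weighted_graph b c).

Definition dd (phi : (X -> C) -> C) (f : X -> C) : X -> C := fadd f (fscale (Copp (phi f)) fone).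
Fixpoint gfun (phi : (X -> C) -> C) (fs : list (X -> C)) : X -> C :=
  match fs with
  | [] => fscale C0 fone
  | f :: l => fadd (fmul (dd phi f) (fconj (dd phi f))) (gfun phi l)
  end.
Definition Gr (phi : (X -> C) -> C) fs (y : X) : R := lsum (fun f => Cnorm2 (Csub (f y) (phi f))) fs.

Lemma gfun_pt phi fs y : gfun phi fs y = (Gr phi fs y, 0).
Proof.
  unfold Gr. induction fs as [|f l IH]; simpl.
  - unfold fscale, fone, Cmul, C0, C1; simpl; f_equal; ring.
  - unfold fadd at 1. rewrite IH. unfold fmul, fconj, dd, fadd, fscale, fone.
    destruct (f y) as [a1 a2]; destruct (phi f) as [p1 p2].
    unfold Cadd, Cmul, Cconj, Copp, Cnorm2, Csub, C1; simpl. f_equal; ring.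
Qed.

Lemma gfun_aplus phi fs : (forall f, In f fs -> algAplus b c f) -> algAplus b c (gfun phi fs).
Proof.
  induction fs as [|f l IH]; intros Hfs; simpl.
  - apply aplus_scale, aplus_one.
  - assert (Hd : algAplus b c (dd phi f)).
    { apply aplus_add; [apply Hfs; left; auto| apply aplus_scale, aplus_one]. }
    apply aplus_add; [apply aplus_mul; auto; apply aplus_conj; auto|].
    apply IH; intros; apply Hfs; right; auto.
Qed.

Lemma gfun_phi phi fs : is_character b c phi -> (forall f, In f fs -> algAplus b c f) ->
  phi (gfun phi fs) = C0.
Proof.
  intros Hphi. pose proof (char_one b c phi Hphi) as H1. destruct Hphi as (Hadd & Hsc & Hmul & _).
  induction fs as [|f l IH]; intros Hfs; simpl.
  - rewrite Hsc by apply aplus_one. apply Cmul_0l.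
  - assert (Hf : algAplus b c f) by (apply Hfs; left; auto).
    assert (Hd : algAplus b c (dd phi f)).
    { apply aplus_add; [auto| apply aplus_scale, aplus_one]. }
    rewrite Hadd by (try apply aplus_mul; auto using aplus_conj, gfun_aplus, in_cons).
    rewrite IH by (intros; apply Hfs; right; auto).
    rewrite Hmul by auto using aplus_conj.
    assert (E : phi (dd phi f) = C0).
    { unfold dd. rewrite Hadd by auto using aplus_scale, aplus_one.
      rewrite Hsc by apply aplus_one. rewrite H1.
      destruct (phi f); unfold Cadd, Cmul, Copp, C1, C0; simpl; f_equal; ring. }
    rewrite E, Cmul_0l. unfold Cadd, C0; simpl; f_equal; ring.
Qed.

Lemma dense_jX : weakstar_dense b c (jX b c).
Proof.
  intros U [HUinv HUo] [phi [Hphi HU]].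
  destruct (HUo phi Hphi HU) as (fs & eps & He & Hfs & Hn).
  assert (Ex : exists x, forall f, In f fs -> Cnorm (Csub (f x) (phi f)) < eps).
  { apply NNPP; intros Hno.
    assert (Hall : forall y, exists f, In f fs /\ eps <= Cnorm (Csub (f y) (phi f))).
    { intros y. apply NNPP; intro Hy. apply Hno. exists y. intros f Hf.
      apply Rnot_le_lt. intros Hle. apply Hy. exists f; auto. }
    assert (HG : forall y, eps * eps <= Gr phi fs y).
    { intros y. destruct (Hall y) as [f [Hin Hle]]. unfold Gr.
      eapply Rle_trans; [|apply (lsum_ge_mem (fun f => Cnorm2 (Csub (f y) (phi f))) fs f); auto].
      - simpl. rewrite <- Cnorm_sq. nra.
      - intros; apply Cnorm2_ge0. }
    assert (Eg : gfun phi fs = fun y => (Gr phi fs y, 0)).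
    { apply functional_extensionality; intros; apply gfun_pt. }
    assert (Hga : algAplus b c (fun y => (Gr phi fs y, 0))).
    { rewrite <- Eg. apply gfun_aplus; auto. }
    assert (Hu : algAplus b c (fun y => (/ Gr phi fs y, 0))).
    { apply (inv_aplus b c _ (eps * eps)); auto. nra. }
    assert (Ep : fmul (fun y => (Gr phi fs y, 0)) (fun y => (/ Gr phi fs y, 0)) = fone).
    { apply functional_extensionality; intros y. unfold fmul, fone, Cmul, C1; simpl.
      specialize (HG y). f_equal; field; nra. }
    pose proof (char_one b c phi Hphi) as H1.
    pose proof Hphi as (_ & _ & Hmul & _).
    rewrite <- Ep, Hmul, <- Eg, gfun_phi, Cmul_0l in H1 by auto.
    apply C1_neq_C0; auto. }
  destruct Ex as [x Hx]. exists (delta x). split; [apply delta_char|]. split.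
  - apply Hn; [apply delta_char|]. intros f Hf. unfold delta. apply Hx; auto.
  - exists x. intros f _. reflexivity.
Qed.
End Dense2.

Theorem mainTheorem10 (X : Type) (b : X -> X -> R) (c : X -> R)
  (hX : countably_infinite X)
  (hG : weighted_graph b c)
  (hconn : connected_graph b)
  (hcc : canonically_compactifiable b c) :
  (forall x : X, is_character b c (delta x)) /\
  weakstar_open b c (jX b c) /\
  weakstar_dense b c (jX b c) /\
  (forall x : X, weakstar_open b c (j_singleton b c x)).
Proof.
  split; [intros; apply delta_char|]. split; [apply open_jX; auto|].
  split; [apply dense_jX|]. intros x; apply open_sing; auto.
Qed.
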